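(* Let $n\ge1$ and let $\Pi\subseteq\mathfrak{D}_n$ be invariant under the CMFS-action, i.e. $\tau^c_S(\sigma)\in\Pi$ for all $\sigma\in\Pi$ and all $S\subseteq[n]$. Let $A^{(\mathsf{cyc},\mathsf{exc})}(\Pi;w,t)=\sum_{\sigma\in\Pi}w^{\mathsf{cyc}\,\sigma}t^{\mathsf{exc}\,\sigma}$. Then $$A^{(\mathsf{cyc},\mathsf{exc})}(\Pi;w,t)=\left(\frac{1+xt}{1+x}\right)^{n}P^{(\mathsf{cyc},\mathsf{cpk},\mathsf{exc})}\left(\Pi;w,\frac{(1+x)^{2}t}{(x+t)(1+xt)},\frac{x+t}{1+xt}\right),$$ equivalently, $$P^{(\mathsf{cyc},\mathsf{cpk},\mathsf{exc})}(\Pi;w,x,t)=\left(\frac{1+u}{1+uv}\right)^{n}A^{(\mathsf{cyc},\mathsf{exc})}(\Pi;w,v),$$ where $u=\frac{1+t^{2}-2xt-(1-t)\sqrt{(1+t)^{2}-4xt}}{2(1-x)t}$ and $v=\frac{(1+t)^{2}-2xt-(1+t)\sqrt{(1+t)^{2}-4xt}}{2xt}$.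
   Context: $\mathfrak{D}_n$ is the set of derangements of $[n]$. $P^{(\mathsf{stat}_1,\ldots,\mathsf{stat}_m)}(\Omega;t_1,\ldots,t_m)=\sum_{\sigma\in\Omega}\prod_jt_j^{\mathsf{stat}_j\sigma}$; $\mathsf{cyc}$ = number of cycles, $\mathsf{exc}\,\sigma=\#\{i:\sigma(i)>i\}$, $\mathsf{cpk}\,\sigma=\#\{x:\sigma^{-1}(x)<x>\sigma(x)\}$. Modified Foata–Strehl action: for a word $\rho$ of a permutation of $[n]$ with convention $\rho(0)=0,\rho(n+1)=\infty$ and $x\in[n]$, write $\rho=w_1w_2xw_3w_4$ where $w_2$ (resp. $w_3$) is the maximal contiguous factor immediately left (resp. right) of $x$ all of whose letters are smaller than $x$; $\varphi_x(\rho)=w_1w_3xw_2w_4$; $\varphi'_x(\rho)=\rho$ if $x$ is a peak of $\rho$ (i.e. its neighbors, with the convention, are both smaller) and $\varphi'_x(\rho)=\varphi_x(\rho)$ otherwise. For $\sigma\in\mathfrak{S}_n$, write each cycle starting with its largest element, order the cycles increasingly by their largest elements, and erase parentheses to get the word $\iota(\sigma)$ ($\iota$ is a bijection of $\mathfrak{S}_n$). For $\sigma\in\mathfrak{D}_n$, $\tau^c_x(\sigma)=\iota^{-1}(\varphi'_x(\iota(\sigma)))$, and for $S\subseteq[n]$, $\tau^c_S=\prod_{x\in S}\tau^c_x$ (these commuting involutions of $\mathfrak{D}_n$ define the CMFS-action of $\mathbb{Z}_2^n$). *)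

(* Defs.v *)
(* Permutations of [n] are {perm 'I_n}; the ordinal i : 'I_n
   stands for the integer i+1 of [n]. Words are seq nat with letters in 1..n. *)
From mathcomp Require Import all_boot all_order all_algebra all_fingroup.
Set Implicit Arguments. Unset Strict Implicit. Unset Printing Implicit Defensive.

Definition derangement n (s : {perm 'I_n}) : bool := [forall i, s i != i].

Definition cyc n (s : {perm 'I_n}) : nat := #|porbits s|.
Definition exc n (s : {perm 'I_n}) : nat := #|[set i : 'I_n | i < s i]|.
Definition cpk n (s : {perm 'I_n}) : nat :=
  #|[set i : 'I_n | ((s^-1)%g i < i) && (s i < i)]|.

(* iota(s): each cycle written starting with its largest element, cycles in
   increasing order of their largest elements, parentheses erased. *)
Definition iota_word n (s : {perm 'I_n}) : seq nat :=
  flatten [seq [seq (val j).+1 | j <- fingraph.orbit (fun k : 'I_n => s k) i]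
          | i : 'I_n <- enum 'I_n & all (fun j : 'I_n => (j <= i)%N) (fingraph.orbit (fun k : 'I_n => s k) i)].

(* modified Foata--Strehl action phi'_x on a word rho of a permutation of [n],
   with the conventions rho(0) = 0 and rho(n+1) = infinity. *)
Definition fs_split (x : nat) (rho : seq nat) :=
  let i := index x rho in
  let left := take i rho in
  let right := drop i.+1 rho in
  let k := find (fun y => x < y) (rev left) in
  let w2 := rev (take k (rev left)) in
  let w1 := rev (drop k (rev left)) in
  let m := find (fun y => x < y) right in
  let w3 := take m right in
  let w4 := drop m right in
  (w1, w2, w3, w4).

Definition phi (x : nat) (rho : seq nat) : seq nat :=
  let: (w1, w2, w3, w4) := fs_split x rho in w1 ++ w3 ++ x :: w2 ++ w4.

Definition is_peak (x : nat) (rho : seq nat) : bool :=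
  let i := index x rho in
  let left := take i rho in
  let right := drop i.+1 rho in
  (last 0 left < x) && (if right is y :: _ then y < x else false).

Definition phi' (x : nat) (rho : seq nat) : seq nat :=
  if is_peak x rho then rho else phi x rho.

(* tau^c_x(s) = iota^{-1}(phi'_x(iota(s))); iota is a bijection of S_n, so
   iota^{-1} is realised as the (unique) permutation with the given word.
   Here x : 'I_n stands for the letter x+1. *)
Definition tau_c n (x : 'I_n) (s : {perm 'I_n}) : {perm 'I_n} :=
  let w := phi' (val x).+1 (iota_word s) in
  if [pick s' : {perm 'I_n} | iota_word s' == w] is Some s' then s' else s.

Definition tau_cS n (S : {set 'I_n}) (s : {perm 'I_n}) : {perm 'I_n} :=
  foldr (fun x t => tau_c x t) s (enum S).

Definition CMFS_invariant n (Pi : {set {perm 'I_n}}) : Prop :=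
  forall (S : {set 'I_n}) (s : {perm 'I_n}), s \in Pi -> tau_cS S s \in Pi.

(* Main.v *)
Require Import Defs.
From mathcomp Require Import all_boot all_order all_algebra all_fingroup.
From mathcomp Require Import zify ring.
Set Implicit Arguments. Unset Strict Implicit. Unset Printing Implicit Defensive.

Definition gtr (o : option nat) (b : nat) := if o is Some c then b < c else true.
Definition nxt (u : seq nat) (e : option nat) := if u is c :: _ then Some c else e.
Fixpoint tyl (a : nat) (u : seq nat) (e : option nat) : seq (nat * (bool * bool)) :=
  match u with
  | [::] => [::]
  | b :: u' => (b, (a < b, gtr (nxt u' e) b)) :: tyl b u' e
  end.
Definition tys (r : seq nat) := tyl 0 r None.

Lemma tyl_cat a u v e : tyl a (u ++ v) e = tyl a u (nxt v e) ++ tyl (last a u) v e.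
Proof.
elim: u a => [|b u IH] a //=; rewrite IH; congr ((_, (_, _)) :: _).
by case: u {IH}.
Qed.

Lemma tyl_left a a' b u e : (a < b) = (a' < b) -> tyl a (b :: u) e = tyl a' (b :: u) e.
Proof. by move=> /= ->. Qed.

Lemma tyl_right a u e e' : (u != [::] -> gtr e (last a u) = gtr e' (last a u)) ->
  tyl a u e = tyl a u e'.
Proof.
elim: u a => [|b u IH] a //= H; rewrite (IH b); last by case: u {IH} H.
by case: u {IH} H => [|c u] /= H; rewrite ?H.
Qed.

Lemma tyl_fst a u e : map fst (tyl a u e) = u.
Proof. by elim: u a => [|b u IH] a //=; rewrite IH. Qed.

Definition lk (y : nat) (L : seq (nat * (bool * bool))) :=
  nth (false, false) (map snd L) (index y (map fst L)).

Lemma lk_mem y c L : uniq (map fst L) -> (y, c) \in L -> lk y L = c.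
Proof.
rewrite /lk; elim: L => [|[z d] L IH] //= /andP[zL uL]; rewrite inE.
case/orP=> [/eqP[-> ->]|yL]; first by rewrite eqxx.
have yz : z != y.
  by apply: contraNneq zL => ->; apply/mapP; exists (y, c).
by rewrite (negbTE yz) /= IH.
Qed.

Lemma lk_in y L : y \in map fst L -> (y, lk y L) \in L.
Proof.
rewrite /lk; elim: L => [|[z d] L IH] //= yL.
rewrite inE eq_sym in yL; case/orP: yL => [/eqP->|yL].
  by rewrite /= eqxx inE eqxx.
case: (z =P y) => [-> /=|ne]; first by rewrite inE eqxx.
by rewrite /= inE IH ?orbT.
Qed.

Fixpoint rec (m : nat) (u : seq nat) : nat :=
  if u is b :: u' then (m < b) + rec (maxn m b) u' else 0.

Lemma rec_cat m u v : rec m (u ++ v) = rec m u + rec (foldl maxn m u) v.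
Proof. by elim: u m => [|b u IH] m //=; rewrite IH addnA. Qed.

Lemma rec_small M u : all (fun b => b <= M) u -> rec M u = 0 /\ foldl maxn M u = M.
Proof.
elim: u => [|b u IH] //= /andP[bM uM].
have -> : maxn M b = M by apply/maxn_idPl.
by rewrite ltnNge bM /=; apply: IH.
Qed.

Lemma foldl_maxn_ge m u : m <= foldl maxn m u.
Proof.
elim: u m => [|b u IH] m //=; exact: leq_trans (leq_maxl m b) (IH _).
Qed.

Lemma foldl_maxn_last m u : last m u <= foldl maxn m u.
Proof.
elim: u m => [|b u IH] m //=; case: u IH => [|c u] IH /=.
  exact: leq_maxr.
exact: IH.
Qed.

Lemma take_find_nohas (T : Type) (p : pred T) s : ~~ has p (take (find p s) s).
Proof.
case: (boolP (has p s)) => h; first by rewrite has_take // ltnn.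
by rewrite hasNfind // take_size.
Qed.

Lemma drop_find_head (p : pred nat) s :
  drop (find p s) s = [::] \/ p (head 0 (drop (find p s) s)).
Proof.
case: (boolP (has p s)) => h; last by rewrite hasNfind // drop_size; left.
by right; rewrite (drop_nth 0) -?has_find //=; apply: nth_find.
Qed.

Definition ltX (X : nat) := fun y : nat => y < X.
Definition gtX (X : nat) := fun y : nat => X < y.

Lemma all_ltX_nohas X w : all (ltX X) w -> ~~ has (gtX X) w.
Proof.
move=> /allP H; apply/hasPn => y /H; rewrite /ltX /gtX => yX.
by rewrite -leqNgt ltnW.
Qed.

Lemma split_eq X w1 w2 w3 w4 :
  X \notin w1 -> all (ltX X) w2 -> all (ltX X) w3 ->
  (w1 = [::] \/ X < last 0 w1) -> (w4 = [::] \/ X < head 0 w4) ->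
  fs_split X (w1 ++ w2 ++ X :: w3 ++ w4) = (w1, w2, w3, w4).
Proof.
move=> X1 H2 H3 H1 H4.
have X2 : X \notin w2.
  by apply/negP => /(allP H2); rewrite /ltX ltnn.
have Hi : index X (w1 ++ w2 ++ X :: w3 ++ w4) = size (w1 ++ w2).
  by rewrite catA index_cat mem_cat (negbTE X1) (negbTE X2) /= eqxx addn0.
rewrite /fs_split Hi catA take_size_cat // drop_cat ltnNge leqnSn /= subSnn /=.
rewrite rev_cat find_cat has_rev (negbTE (all_ltX_nohas H2)).
have -> : find (fun y => X < y) (rev w1) = 0.
  clear Hi; case: H1 => [->//|]; case/lastP: w1 {X1} => [//|w b].
  by rewrite last_rcons rev_rcons /= => ->.
rewrite addn0 size_rev take_size_cat ?size_rev // drop_size_cat ?size_rev //.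
rewrite !revK drop0 find_cat (negbTE (all_ltX_nohas H3)).
have -> : find [eta leq X.+1] w4 = 0.
  by clear Hi; case: H4 => [->//|]; case: w4 => //= c w ->.
by rewrite addn0 take_size_cat // drop_size_cat.
Qed.

Lemma split_ex X r : uniq r -> X \in r -> exists w1 w2 w3 w4,
  [/\ r = w1 ++ w2 ++ X :: w3 ++ w4, X \notin w1, all (ltX X) w2, all (ltX X) w3
   & (w1 = [::] \/ X < last 0 w1) /\ (w4 = [::] \/ X < head 0 w4)].
Proof.
move=> ur Xr; set i := index X r.
have Hr : r = take i r ++ X :: drop i.+1 r.
  by rewrite -{1}(cat_take_drop i r) (drop_nth 0) ?index_mem // nth_index.
move: ur; rewrite Hr cat_uniq /= => /and4P [_ HL XR _].
have XL : X \notin take i r.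
  by apply: contra HL => ->.
set L := take i r in Hr XL *; set R := drop i.+1 r in Hr XR *.
set rL := rev L; set k := find (gtX X) rL.
set m := find (gtX X) R.
exists (rev (drop k rL)), (rev (take k rL)), (take m R), (drop m R); split.
- by rewrite catA -rev_cat cat_take_drop revK cat_take_drop.
- by apply: contra XL; rewrite mem_rev => /mem_drop; rewrite mem_rev.
- rewrite all_rev; apply/allP => y yin; rewrite /ltX ltn_neqAle.
  have yL : y \in L by rewrite -mem_rev; apply: mem_take yin.
  have := take_find_nohas (gtX X) rL; rewrite -/k => /hasPn /(_ _ yin).
  rewrite /gtX -leqNgt => ->; rewrite andbT.
  by apply: contraNneq XL => <-.
- apply/allP => y yin; rewrite /ltX ltn_neqAle.
  have yR : y \in R by apply: mem_take yin.
  have := take_find_nohas (gtX X) R; rewrite -/m => /hasPn /(_ _ yin).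
  rewrite /gtX -leqNgt => ->; rewrite andbT.
  by apply: contraNneq XR => <-.
- split.
  + case: (drop_find_head (gtX X) rL) => H; rewrite -/k in H.
      by rewrite H; left.
    move: H; case: (drop k rL) => [|b w] /= H; first by left.
    by rewrite rev_cons last_rcons; right.
  + exact: drop_find_head.
Qed.

Section Dec.
Variables (X : nat) (w1 w2 w3 w4 : seq nat).
Hypotheses (X1 : X \notin w1) (H2 : all (ltX X) w2) (H3 : all (ltX X) w3)
  (H1 : X < last 0 w1) (H4 : w4 = [::] \/ X < head 0 w4).

Let r := w1 ++ w2 ++ X :: w3 ++ w4.

Lemma X2 : X \notin w2.
Proof. by apply/negP => /(allP H2); rewrite /ltX ltnn. Qed.

Lemma index_dec : index X r = size (w1 ++ w2).
Proof.
by rewrite /r catA index_cat mem_cat (negbTE X1) (negbTE X2) /= eqxx addn0.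
Qed.

Lemma take_dec : take (index X r) r = w1 ++ w2.
Proof. by rewrite index_dec /r catA take_size_cat. Qed.

Lemma drop_dec : drop (index X r).+1 r = w3 ++ w4.
Proof. by rewrite index_dec /r catA drop_cat ltnNge leqnSn /= subSnn /= drop0. Qed.

Lemma lastw2 : (last (last 0 w1) w2 < X) = (w2 != [::]).
Proof.
move: H2; case/lastP: w2 => [|w b] /=; first by rewrite ltnNge ltnW.
by rewrite last_rcons all_rcons => /andP[]; rewrite /ltX => -> _; case: w.
Qed.

Lemma lastw2' a : a <= X -> last a w2 <= X.
Proof.
move: H2; case/lastP: w2 => [|w b] //= ; rewrite last_rcons all_rcons.
by case/andP => /ltnW.
Qed.

Lemma gtr_w3 : gtr (nxt (w3 ++ w4) None) X = (w3 == [::]).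
Proof.
move: H3; case: w3 => [|b w] /=; last by rewrite /ltX => /andP[bX _]; rewrite ltnNge ltnW.
by case: H4 => [->|]; case: w4.
Qed.

Lemma is_peak_dec : is_peak X r = (w2 != [::]) && (w3 != [::]).
Proof.
rewrite /is_peak take_dec drop_dec last_cat lastw2; congr (_ && _).
move: H3; case: w3 => [|b w] /=; last by rewrite /ltX => /andP[-> _].
by case: H4 => [->|] //; case: w4 => //= c w Xc; rewrite ltnNge (ltnW Xc).
Qed.

Lemma tys_dec : tys r = tyl 0 w1 (Some X) ++ tyl X w2 (Some X) ++
   (X, (w2 != [::], w3 == [::])) :: tyl X w3 (Some X) ++ tyl X w4 None.
Proof.
rewrite /tys /r tyl_cat; congr (_ ++ _).
  apply: tyl_right => _; move: H2; case: w2 => [|b w] /=.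
    by rewrite ltnNge (ltnW H1).
  rewrite /ltX => /andP[bX _]; rewrite ltnNge ltnNge (ltnW H1).
  by rewrite ltnW // (ltn_trans bX H1).
rewrite tyl_cat; congr (_ ++ _).
  move: H2; case: w2 => [|b w] //= /andP[bX _]; apply: tyl_left.
  by rewrite /ltX in bX; rewrite !ltnNge (ltnW bX) (ltnW (ltn_trans bX H1)).
rewrite /= lastw2 gtr_w3 tyl_cat; congr (_ :: (_ ++ _)).
  apply: tyl_right; move: H3; case/lastP: w3 => [|w b] //=.
  rewrite last_rcons all_rcons /ltX => /andP[bX _] _.
  by case: H4 => [->|]; case: w4 => //= c w' Xc; rewrite bX (ltn_trans bX Xc).
case: w4 H4 => [|c w] //= [] //= Xc; congr ((_, (_, _)) :: _).
have : last X w3 <= X.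
  move: H3; case/lastP: w3 => [|w' b] //=; rewrite last_rcons all_rcons.
  by case/andP => /ltnW.
by move=> h; rewrite Xc (leq_ltn_trans h Xc).
Qed.

Lemma rec_dec : rec 0 r = rec 0 w1 + rec (foldl maxn 0 w1) w4.
Proof.
rewrite /r rec_cat; congr (_ + _).
have hM : X < foldl maxn 0 w1 := leq_trans H1 (foldl_maxn_last 0 w1).
rewrite -cat_cons catA rec_cat.
have [-> ->] : rec (foldl maxn 0 w1) (w2 ++ X :: w3) = 0 /\
  foldl maxn (foldl maxn 0 w1) (w2 ++ X :: w3) = foldl maxn 0 w1.
  apply: rec_small; rewrite all_cat /= ltnW //=.
  apply/andP; split; [move: H2|move: H3]; apply: sub_all => y; rewrite /ltX => yX;
  exact: ltnW (ltn_trans yX hM).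
by [].
Qed.

Lemma phi_dec : phi X r = w1 ++ w3 ++ X :: w2 ++ w4.
Proof.
rewrite /phi /r split_eq //; last by right.
Qed.

End Dec.

Lemma tys_uniq r : uniq (map fst (tys r)) = uniq r.
Proof. by rewrite /tys tyl_fst. Qed.

Lemma peak_lk X r : uniq r -> X \in r -> is_peak X r = (lk X (tys r) == (true, false)).
Proof.
move=> ur Xr; set i := index X r.
have Hr : r = take i r ++ X :: drop i.+1 r.
  by rewrite -{1}(cat_take_drop i r) (drop_nth 0) ?index_mem // nth_index.
have := ur; rewrite {1}Hr cat_uniq /= => /and4P [_ HL XR _].
have XL : X \notin take i r by apply: contra HL => ->.
rewrite /is_peak -/i.
have -> : lk X (tys r) = (last 0 (take i r) < X, gtr (nxt (drop i.+1 r) None) X).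
  apply: lk_mem; first by rewrite tys_uniq.
  by rewrite {3}Hr /tys tyl_cat /= mem_cat inE eqxx orbT.
move: XR; case: (drop i.+1 r) => [|y R] /=.
  by move=> _; case: (_ < X).
rewrite inE negb_or eq_sym => /andP[yX _].
have -> : (y < X) = ~~ (X < y) by rewrite ltnNge leq_eqVlt eq_sym (negbTE yX).
by case: (_ < X); case: (X < y).
Qed.

Section Main.
Variables (X : nat) (r : seq nat).
Hypotheses (ur : uniq r) (Xr : X \in r) (np : ~~ is_peak X r)
  (hb : has (gtX X) (take (index X r) r)).

Lemma word_main : let r' := phi' X r in
  [/\ perm_eq r' r, phi' X r' = r,
      (forall y, y \in r -> y != X -> lk y (tys r') = lk y (tys r)),
      [/\ lk X (tys r) = (true, true) -> lk X (tys r') = (false, false),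
          lk X (tys r) = (false, false) -> lk X (tys r') = (true, true) &
          lk X (tys r') != (true, false)]
    & rec 0 r' = rec 0 r].
Proof.
have [w1 [w2 [w3 [w4 [Hr X1 H2 H3 [H1 H4]]]]]] := split_ex ur Xr.
have H1' : X < last 0 w1.
  case: H1 => // w10; move: hb; rewrite Hr take_dec //.
  rewrite w10 /= => /hasP[y /(allP H2)]; rewrite /ltX /gtX => yX Xy.
  by have := ltn_trans yX Xy; rewrite ltnn.
have pk : is_peak X r = (w2 != [::]) && (w3 != [::]) by rewrite Hr is_peak_dec.
rewrite /phi' (negbTE np) Hr phi_dec //.
have np' := np; rewrite pk in np'.
have pk' : is_peak X (w1 ++ w3 ++ X :: w2 ++ w4) = false.
  by rewrite is_peak_dec // andbC (negbTE np').
have pe : perm_eq (w1 ++ w3 ++ X :: w2 ++ w4) (w1 ++ w2 ++ X :: w3 ++ w4).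
  by apply/seq.permP => p; rewrite !count_cat /= !count_cat; lia.
have ur' : uniq (w1 ++ w3 ++ X :: w2 ++ w4) by rewrite (perm_uniq pe) -Hr.
move: (ur); rewrite Hr => ur0.
have lkX : lk X (tys (w1 ++ w2 ++ X :: w3 ++ w4)) = (w2 != [::], w3 == [::]).
  apply: lk_mem; first by rewrite tys_uniq.
  by rewrite tys_dec // !mem_cat inE eqxx !orbT.
have lkX' : lk X (tys (w1 ++ w3 ++ X :: w2 ++ w4)) = (w3 != [::], w2 == [::]).
  apply: lk_mem; first by rewrite tys_uniq.
  by rewrite tys_dec // !mem_cat inE eqxx !orbT.
split => //.
- by rewrite /phi' pk' phi_dec.
- move=> y yr yX; apply: lk_mem; first by rewrite tys_uniq.
  have := lk_in (y := y) (L := tys (w1 ++ w2 ++ X :: w3 ++ w4)).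
  rewrite tyl_fst => /(_ yr); move: (lk y _) => c.
  rewrite tys_dec // tys_dec // !mem_cat !inE.
  have -> : ((y, c) == (X, (w2 != [::], w3 == [::]))) = false.
    by apply/negbTE; apply: contra yX => /eqP[->].
  rewrite /= !mem_cat.
  by move=> /orP[->//|/orP[->|/orP[->|->]]]; rewrite ?orbT.
- rewrite lkX lkX'; move: np'.
  by case: (w2 == [::]); case: (w3 == [::]).
- by rewrite !rec_dec.
Qed.

End Main.

Lemma word_peak X r : is_peak X r -> phi' X r = r.
Proof. by rewrite /phi' => ->. Qed.

Lemma fst_uniq_eq (A B : eqType) (L : seq (A * B)) x y1 y2 :
  uniq (map fst L) -> (x, y1) \in L -> (x, y2) \in L -> y1 = y2.
Proof.
elim: L => [|[a b] L IH] //= /andP[aL uL]; rewrite !inE.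
case/orP=> [/eqP[ex ey1]|h1]; case/orP=> [/eqP[ex' ey2]|h2].
- by rewrite ey1 ey2.
- by case/negP: aL; apply/mapP; exists (x, y2); rewrite // ex.
- by case/negP: aL; apply/mapP; exists (x, y1); rewrite // ex'.
- exact: IH.
Qed.

Section Perm.
Variable n : nat.
Implicit Types (s : {perm 'I_n}) (i j a : 'I_n).

Definition orb s i := fingraph.orbit (fun k : 'I_n => s k) i.
Definition Cs s := [seq i : 'I_n <- enum 'I_n | all (fun j : 'I_n => (j <= i)%N) (orb s i)].
Definition blk s i := [seq (val j).+1 | j <- orb s i].
Definition ty s a := (((s^-1)%g a < a)%N, (a < s a)%N).

Lemma iota_wordE s : iota_word s = flatten [seq blk s i | i <- Cs s].
Proof. by []. Qed.

Lemma injs s : injective (fun k : 'I_n => s k).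
Proof. exact: perm_inj. Qed.

Lemma orb_mem s i j : (j \in orb s i) = fconnect (fun k : 'I_n => s k) i j.
Proof. by rewrite /orb -fconnect_orbit. Qed.

Lemma orb_sym s i j : (j \in orb s i) = (i \in orb s j).
Proof. by rewrite !orb_mem (fconnect_sym (@injs s)). Qed.

Lemma orb_trans s i j k : j \in orb s i -> k \in orb s j -> k \in orb s i.
Proof. by rewrite !orb_mem; apply: connect_trans. Qed.

Lemma orb_same s i j : j \in orb s i -> orb s j =i orb s i.
Proof.
move=> ji k; apply/idP/idP => h; first exact: orb_trans ji h.
by apply: orb_trans h; rewrite orb_sym.
Qed.

Lemma orb_self s i : i \in orb s i.
Proof. exact: in_orbit. Qed.

Lemma orb_s s i : s i \in orb s i.
Proof. by rewrite orb_mem; apply: fconnect1. Qed.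

Lemma orb_sV s i : (s^-1)%g i \in orb s i.
Proof. by rewrite orb_sym; have := orb_s s ((s^-1)%g i); rewrite permKV. Qed.

Lemma orb_uniq s i : uniq (orb s i).
Proof. exact: orbit_uniq. Qed.

Lemma orb_cons s i : exists v, orb s i = i :: v /\
  path (frel (fun k : 'I_n => s k)) i v /\ s (last i v) = i.
Proof.
have := cycle_orbit (@injs s) i; rewrite -/(orb s i).
have : orb s i = i :: traject (fun k : 'I_n => s k) (s i) (fingraph.order (fun k : 'I_n => s k) i).-1.
  by rewrite /orb /fingraph.orbit -orderSpred.
move=> ->; set v := traject _ _ _ => /=; rewrite rcons_path => /andP[pv /eqP lv].
by exists v.
Qed.

Lemma mem_Cs s i : (i \in Cs s) = all (fun j : 'I_n => (j <= i)%N) (orb s i).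
Proof. by rewrite mem_filter mem_enum andbT. Qed.

Lemma Cs_uniq s : uniq (Cs s).
Proof. by rewrite filter_uniq // enum_uniq. Qed.

Lemma Cs_sorted s : sorted (fun i j : 'I_n => (i < j)%N) (Cs s).
Proof.
apply: sorted_filter; first by move=> x y z; apply: ltn_trans.
by have := iota_ltn_sorted 0 n; rewrite -val_enum_ord sorted_map.
Qed.



Lemma max_exists (u : seq 'I_n) : u != [::] ->
  exists2 m, m \in u & all (fun j : 'I_n => (j <= m)%N) u.
Proof.
elim: u => [|b u IH] // _.
case: u IH => [|c u] IH.
  by exists b; rewrite ?inE ?eqxx //= leqnn.
have [m mu mall] := IH isT.
case: (leqP b m) => bm.
  exists m; first by rewrite inE mu orbT.
  by apply/allP => j; rewrite inE => /orP[/eqP->//|/(allP mall) jm].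
exists b; first by rewrite inE eqxx.
apply/allP => j; rewrite inE => /orP[/eqP->//|/(allP mall) jm].
exact: leq_trans jm (ltnW bm).
Qed.

Lemma cover s a : exists2 i, i \in Cs s & a \in orb s i.
Proof.
have ne : orb s a != [::] by case: (orb_cons s a) => v [-> _].
have [m mo mall] := max_exists ne.
exists m; last by rewrite orb_sym.
rewrite mem_Cs; apply/allP => j; rewrite (orb_same mo) => /(allP mall) //.
Qed.

Lemma Cs_disj s i i' a : i \in Cs s -> i' \in Cs s -> a \in orb s i -> a \in orb s i' -> i = i'.
Proof.
rewrite !mem_Cs => /allP hi /allP hi' ai ai'.
have e : orb s i =i orb s i'.
  by move=> k; rewrite -(orb_same ai) (orb_same ai').
apply: val_inj; apply/eqP; rewrite eqn_leq hi ?e ?orb_self //=.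
by rewrite hi' -?e ?orb_self.
Qed.

Lemma flat_uniq s hs : uniq hs -> {subset hs <= Cs s} ->
  uniq (flatten [seq orb s i | i <- hs]).
Proof.
elim: hs => [|i hs IH] //= /andP[ihs uhs] sub.
rewrite cat_uniq orb_uniq IH ?andbT //; last by move=> j jh; apply: sub; rewrite inE jh orbT.
apply/hasPn => a /flattenP [l /mapP [i' i'h ->] ai'].
apply/negP => ai; case/negP: ihs; rewrite (Cs_disj _ _ ai ai') //.
- by apply: sub; rewrite inE eqxx.
- by apply: sub; rewrite inE i'h orbT.
Qed.

Lemma flat_perm s : perm_eq (flatten [seq orb s i | i <- Cs s]) (enum 'I_n).
Proof.
apply: uniq_perm; [exact: flat_uniq (Cs_uniq s) (fun _ h => h)|exact: enum_uniq|].
move=> a; rewrite mem_enum; apply/flattenP.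
by have [i iC ai] := cover s a; exists (orb s i) => //; apply: map_f.
Qed.

Lemma iota_word_map s : iota_word s = [seq (val j).+1 | j <- flatten [seq orb s i | i <- Cs s]].
Proof. by rewrite iota_wordE map_flatten -map_comp. Qed.

Lemma iota_word_perm s : perm_eq (iota_word s) [seq (val j).+1 | j <- enum 'I_n].
Proof. by rewrite iota_word_map; apply: perm_map; apply: flat_perm. Qed.

Lemma succ_inj : injective (fun j : 'I_n => (val j).+1).
Proof. by move=> x y [] /val_inj. Qed.

Lemma iota_word_uniq s : uniq (iota_word s).
Proof. by rewrite (perm_uniq (iota_word_perm s)) (map_inj_uniq succ_inj) enum_uniq. Qed.

Lemma iota_word_mem s a : (val a).+1 \in iota_word s.
Proof. by rewrite (perm_mem (iota_word_perm s)) (mem_map succ_inj) mem_enum. Qed.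

End Perm.

Fixpoint dpe (m : nat) (u : seq nat) (e : option nat) : seq (nat * nat) :=
  match u with
  | [::] => [::]
  | b :: u' => (b, match nxt u' e with
                   | Some c => if c < maxn m b then c else maxn m b
                   | None => maxn m b end) :: dpe (maxn m b) u' e
  end.

Lemma dpe_cat m u v e : dpe m (u ++ v) e = dpe m u (nxt v e) ++ dpe (foldl maxn m u) v e.
Proof.
elim: u m => [|b u IH] m //=; rewrite IH; congr ((_, _) :: _).
by case: u {IH}.
Qed.

Lemma dpe_fst m u e : map fst (dpe m u e) = u.
Proof. by elim: u m => [|b u IH] m //=; rewrite IH. Qed.

Lemma tyl_cons a b u e : tyl a (b :: u) e = (b, (a < b, gtr (nxt u e) b)) :: tyl b u e.
Proof. by []. Qed.

Lemma dpe_cons m b u e : dpe m (b :: u) e = (b, match nxt u e with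
                   | Some c => if c < maxn m b then c else maxn m b
                   | None => maxn m b end) :: dpe (maxn m b) u e.
Proof. by []. Qed.

Section Blocks.
Variable n : nat.
Implicit Types (s : {perm 'I_n}) (i j a : 'I_n).

Lemma der_fix s j : derangement s -> s j != j.
Proof. by move=> /forallP. Qed.

Lemma tyl_path s (v : seq 'I_n) (b0 : 'I_n) (a : nat) e :
  path (frel (fun k : 'I_n => s k)) b0 v ->
  (a < (val b0).+1) = ((s^-1)%g b0 < b0)%N ->
  gtr e (val (last b0 v)).+1 = (last b0 v < s (last b0 v))%N ->
  tyl a [seq (val j).+1 | j <- b0 :: v] e = [seq ((val j).+1, ty s j) | j <- b0 :: v].
Proof.
elim: v b0 a => [|c v IH] b0 a.
  by move=> _ h1 h2 /=; rewrite h1 h2.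
move=> /andP[/eqP sb0 pv] h1 h2.
have IH' := IH c (val b0).+1 pv.
rewrite /= in IH'; rewrite /= IH' //; last by rewrite -sb0 permK ltnS.
by rewrite /ty h1 -sb0 ltnS.
Qed.

Lemma mem_orb_le s i j : i \in Cs s -> j \in orb s i -> (j <= i)%N.
Proof. by rewrite mem_Cs => /allP h /h. Qed.

Lemma tyl_blk s i (a : nat) e : derangement s -> i \in Cs s -> a <= val i ->
  gtr e (val i).+1 ->
  tyl a (blk s i) e = [seq ((val j).+1, ty s j) | j <- orb s i].
Proof.
move=> ds iC ai ge.
have [v [ov [pv lv]]] := orb_cons s i.
rewrite /blk ov; apply: tyl_path => //.
  have h1 := mem_orb_le iC (orb_sV s i).
  have h2 : (s^-1)%g i != i.
    by apply: contra (der_fix i ds) => /eqP h; rewrite -{1}h permKV.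
  by rewrite ltnS ai ltn_neqAle h2 h1.
have lo : last i v \in orb s i by rewrite ov mem_last.
have l1 := mem_orb_le iC lo.
have l2 : last i v != i by apply: contra (der_fix (last i v) ds) => /eqP e1; rewrite lv e1.
have -> : (last i v < s (last i v))%N = true by rewrite lv ltn_neqAle l2 l1.
by case: e ge => //= c ic; apply: leq_ltn_trans ic; rewrite ltnS.
Qed.

Lemma dpe_path s (v : seq 'I_n) (b0 : 'I_n) m M e :
  path (frel (fun k : 'I_n => s k)) b0 v ->
  all (fun j : 'I_n => (val j).+1 < M) v -> (val b0).+1 <= M ->
  maxn m (val b0).+1 = M -> (val (s (last b0 v))).+1 = M ->
  (if e is Some c then M <= c else true) ->
  dpe m [seq (val j).+1 | j <- b0 :: v] e = [seq ((val j).+1, (val (s j)).+1) | j <- b0 :: v].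
Proof.
elim: v b0 m => [|c v IH] b0 m /=.
  move=> _ _ _ -> <-; case: e => // c cM.
  by rewrite ltnNge cM.
move=> /andP[/eqP sb0 pv] /andP[cM aM] bM mM lM ce.
have IH' := IH c M pv aM (ltnW cM) (maxn_idPl (ltnW cM)) lM ce.
rewrite /= in IH'; rewrite /= mM IH' cM sb0 //.
Qed.

Lemma orb_tail s i v : orb s i = i :: v -> i \in Cs s -> all (fun j : 'I_n => (j < i)%N) v.
Proof.
move=> ov iC; have := orb_uniq s i; rewrite ov /= => /andP[iv _].
apply/allP => j jv; rewrite ltn_neqAle (mem_orb_le iC) ?ov ?inE ?jv ?orbT // andbT.
by apply: contraNneq iv => /val_inj <-.
Qed.

Lemma dpe_blk s i m e : i \in Cs s -> m <= (val i).+1 ->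
  (if e is Some c then (val i).+1 <= c else true) ->
  dpe m (blk s i) e = [seq ((val j).+1, (val (s j)).+1) | j <- orb s i].
Proof.
move=> iC mi ge.
have [v [ov [pv lv]]] := orb_cons s i.
rewrite /blk ov; apply: (dpe_path (M := (val i).+1)) => //.
- by apply: sub_all (orb_tail ov iC) => j /=; rewrite ltnS.
- by apply/maxn_idPr.
- by rewrite lv.
Qed.



Lemma blk_cons s i : i \in Cs s -> exists w, blk s i = (val i).+1 :: w /\ all (fun b => b <= val i) w.
Proof.
move=> iC; have [v [ov _]] := orb_cons s i.
exists [seq (val j).+1 | j <- v]; rewrite /blk ov; split => //.
apply/allP => b /mapP [j jv ->].
by have := allP (orb_tail ov iC) j jv.
Qed.

Lemma foldl_blk s i m : i \in Cs s -> m <= (val i).+1 -> foldl maxn m (blk s i) = (val i).+1.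
Proof.
move=> iC mi; have [w [-> wa]] := blk_cons iC.
rewrite /= (maxn_idPr mi); apply: (proj2 (rec_small _)).
by apply: sub_all wa => b /leqW.
Qed.

Lemma rec_blk s i m : i \in Cs s -> m <= val i -> rec m (blk s i) = 1.
Proof.
move=> iC mi; have [w [-> wa]] := blk_cons iC.
rewrite /= ltnS mi (maxn_idPr (leqW mi)) (proj1 (rec_small _)) //.
by apply: sub_all wa => b /leqW.
Qed.

Lemma last_blk s i m : i \in Cs s -> last m (blk s i) <= (val i).+1.
Proof.
move=> iC; have [w [-> wa]] := blk_cons iC; rewrite /=.
case/lastP: w wa => [|w b] //=; rewrite last_rcons all_rcons => /andP[+ _].
exact: leqW.
Qed.

Lemma nxt_flat s hs : {subset hs <= Cs s} ->
  nxt (flatten [seq blk s i | i <- hs]) None =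
  if hs is i :: _ then Some (val i).+1 else None.
Proof.
case: hs => [|i hs] //= sub.
have [w [-> _]] := blk_cons (sub i (mem_head _ _)); by [].
Qed.

Definition ltI := fun i j : 'I_n => (i < j)%N.

Lemma ltI_trans : transitive ltI.
Proof. by move=> x y z; apply: ltn_trans. Qed.


Lemma dpe_flat s hs m : sorted ltI hs -> {subset hs <= Cs s} -> all (fun i => m <= val i) hs ->
  dpe m (flatten [seq blk s i | i <- hs]) None =
  flatten [seq [seq ((val j).+1, (val (s j)).+1) | j <- orb s i] | i <- hs].
Proof.
elim: hs m => [|i hs IH] m //= so sub /andP[mi ma].
have iC : i \in Cs s by apply: sub; apply: mem_head.
have sub' : {subset hs <= Cs s} by move=> j jh; apply: sub; rewrite inE jh orbT.
have hsi : all (ltI i) hs by apply: order_path_min so; apply: ltI_trans.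
rewrite dpe_cat foldl_blk ?(leqW mi) // dpe_blk ?(leqW mi) //.
  by rewrite IH ?(path_sorted so) //.
by rewrite nxt_flat //; case: hs {IH so sub sub' ma} hsi => //= j hs /andP[/ltnW].
Qed.

Lemma tyl_flat s hs m : derangement s -> sorted ltI hs -> {subset hs <= Cs s} ->
  all (fun i => m <= val i) hs ->
  tyl m (flatten [seq blk s i | i <- hs]) None =
  flatten [seq [seq ((val j).+1, ty s j) | j <- orb s i] | i <- hs].
Proof.
move=> ds; elim: hs m => [|i hs IH] m //= so sub /andP[mi ma].
have iC : i \in Cs s by apply: sub; apply: mem_head.
have sub' : {subset hs <= Cs s} by move=> j jh; apply: sub; rewrite inE jh orbT.
have hsi : all (ltI i) hs by apply: order_path_min so; apply: ltI_trans.
rewrite tyl_cat tyl_blk //.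
  rewrite IH ?(path_sorted so) //.
  by apply: sub_all hsi => j /= ij; apply: leq_trans (last_blk _ iC) ij.
by rewrite nxt_flat //; case: hs {IH so sub sub' ma} hsi => //= j hs /andP[+ _]; rewrite /ltI ltnS.
Qed.

Lemma rec_flat s hs m : sorted ltI hs -> {subset hs <= Cs s} -> all (fun i => m <= val i) hs ->
  rec m (flatten [seq blk s i | i <- hs]) = size hs.
Proof.
elim: hs m => [|i hs IH] m //= so sub /andP[mi ma].
have iC : i \in Cs s by apply: sub; apply: mem_head.
have sub' : {subset hs <= Cs s} by move=> j jh; apply: sub; rewrite inE jh orbT.
have hsi : all (ltI i) hs by apply: order_path_min so; apply: ltI_trans.
by rewrite rec_cat rec_blk // foldl_blk ?(leqW mi) // IH ?(path_sorted so).
Qed.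

Lemma all0 (hs : seq 'I_n) : all (fun i : 'I_n => 0 <= val i) hs.
Proof. by apply/allP. Qed.

Lemma dpe_word s : dpe 0 (iota_word s) None =
  [seq ((val j).+1, (val (s j)).+1) | j <- flatten [seq orb s i | i <- Cs s]].
Proof.
rewrite iota_wordE dpe_flat ?(Cs_sorted s) ?all0 //.
by rewrite map_flatten -map_comp.
Qed.

Lemma iota_word_inj : injective (@iota_word n).
Proof.
move=> s1 s2 e; apply/permP => a; apply: val_inj; apply: succn_inj.
have u : uniq (map fst (dpe 0 (iota_word s1) None)) by rewrite dpe_fst iota_word_uniq.
apply: (fst_uniq_eq u).
  rewrite dpe_word; apply: (map_f (fun j : 'I_n => ((val j).+1, (val (s1 j)).+1))).
  by rewrite (perm_mem (flat_perm s1)) mem_enum.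
rewrite e dpe_word; apply: (map_f (fun j : 'I_n => ((val j).+1, (val (s2 j)).+1))).
by rewrite (perm_mem (flat_perm s2)) mem_enum.
Qed.

Lemma tys_word s : derangement s -> tys (iota_word s) =
  [seq ((val j).+1, ty s j) | j <- flatten [seq orb s i | i <- Cs s]].
Proof.
move=> ds; rewrite /tys iota_wordE tyl_flat ?(Cs_sorted s) ?all0 //.
by rewrite map_flatten -map_comp.
Qed.

Lemma lk_word s a : derangement s -> lk (val a).+1 (tys (iota_word s)) = ty s a.
Proof.
move=> ds; apply: lk_mem; first by rewrite tys_uniq iota_word_uniq.
rewrite tys_word //; apply: (map_f (fun j : 'I_n => ((val j).+1, ty s j))).
by rewrite (perm_mem (flat_perm s)) mem_enum.
Qed.

Lemma rec_word s : rec 0 (iota_word s) = size (Cs s).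
Proof. by rewrite iota_wordE rec_flat ?(Cs_sorted s) ?all0. Qed.

Lemma porbit_orb s x y : (y \in porbit s x) = (y \in orb s x).
Proof.
rewrite orb_mem; apply/porbitP/idP => [[i ->]|h].
  by rewrite permX; apply: fconnect_iter.
by exists (findex (fun k : 'I_n => s k) x y); rewrite permX iter_findex.
Qed.

Lemma cyc_word s : cyc s = rec 0 (iota_word s).
Proof.
rewrite rec_word /cyc.
have -> : porbits s = porbit s @: Cs s.
  apply/setP => X; apply/imsetP/imsetP => [[a _ ->]|[i _ ->]]; last by exists i.
  have [i iC ai] := cover s a; exists i => //.
  by apply/eqP; rewrite eq_porbit_mem porbit_orb.
rewrite card_in_imset; first by apply/card_uniqP; apply: Cs_uniq.
move=> i i' iC i'C e; apply: (Cs_disj iC i'C (orb_self s i)).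
by rewrite -porbit_orb -e porbit_id.
Qed.

End Blocks.

Lemma phi'_perm X r : uniq r -> X \in r -> perm_eq (phi' X r) r.
Proof.
move=> ur Xr; rewrite /phi'; case: ifP => _ //.
have [w1 [w2 [w3 [w4 [Hr X1 H2 H3 [H1 H4]]]]]] := split_ex ur Xr.
rewrite Hr /phi split_eq //.
by apply/seq.permP => p; rewrite !count_cat /= !count_cat; lia.
Qed.

Section Surj.
Variable n : nat.
Implicit Types (s : {perm 'I_n}).

Definition W := [seq (val j).+1 | j <- enum 'I_n].

Lemma W_mem y : (y \in W) = (0 < y <= n).
Proof.
apply/mapP/idP => [[j _ ->]|/andP[y0 yn]]; first by rewrite ltn_ord.
have h : (y.-1 < n)%N by lia.
exists (Ordinal h); first by rewrite mem_enum.
by rewrite /=; lia.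
Qed.

Lemma word_perm w : perm_eq w W -> {p : {perm 'I_n} | forall i : 'I_n, (val (p i)).+1 = nth 0 w i}.
Proof.
move=> pw.
have sw : size w = n by rewrite (perm_size pw) size_map size_enum_ord.
have uw : uniq w by rewrite (perm_uniq pw) (map_inj_uniq (@succ_inj n)) enum_uniq.
have inw i : (i < n)%N -> 0 < nth 0 w i <= n.
  by move=> ilt; rewrite -W_mem -(perm_mem pw) mem_nth // sw.
pose f := fun i : 'I_n => (insubd i (nth 0 w i).-1 : 'I_n).
have fv i : (val (f i)).+1 = nth 0 w i.
  have := inw i (ltn_ord i); rewrite /f val_insubd => h.
  have h2 : ((nth 0 w i).-1 < n)%N by lia.
  rewrite h2 /=; lia.
have finj : injective f.
  move=> i j e; apply: val_inj; apply/eqP.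
  have hi : (val i < size w)%N by rewrite sw ltn_ord.
  have hj : (val j < size w)%N by rewrite sw ltn_ord.
  by rewrite -(nth_uniq 0 hi hj uw) -!fv e.
by exists (perm finj) => i; rewrite permE fv.
Qed.

Lemma size_word s : size (iota_word s) = n.
Proof. by rewrite (perm_size (iota_word_perm s)) size_map size_enum_ord. Qed.

Definition enc s := sval (word_perm (iota_word_perm s)).

Lemma encE s (i : 'I_n) : (val (enc s i)).+1 = nth 0 (iota_word s) i.
Proof. exact: (svalP (word_perm (iota_word_perm s))). Qed.

Lemma word_eq s u : size u = n -> (forall i : 'I_n, (val (enc s i)).+1 = nth 0 u i) ->
  iota_word s = u.
Proof.
move=> su h; apply: (eq_from_nth (x0 := 0)); rewrite ?size_word ?su // => i ilt.
by rewrite -(encE s (Ordinal ilt)) h.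
Qed.

Lemma enc_inj : injective enc.
Proof.
move=> s1 s2 e; apply: iota_word_inj; apply: word_eq; first exact: size_word.
by move=> i; rewrite e encE.
Qed.

Lemma iota_word_surj u : perm_eq u W -> exists s, iota_word s = u.
Proof.
move=> pu; have [p hp] := word_perm pu.
have [g encg genc] := injF_bij enc_inj.
exists (g p); apply: word_eq; first by rewrite (perm_size pu) size_map size_enum_ord.
by move=> i; rewrite genc hp.
Qed.

Lemma tau_word s x : iota_word (tau_c x s) = phi' (val x).+1 (iota_word s).
Proof.
rewrite /tau_c; case: pickP => [s' /eqP //|none].
have pu : perm_eq (phi' (val x).+1 (iota_word s)) W.
  apply: perm_trans (iota_word_perm s).
  by apply: phi'_perm; [apply: iota_word_uniq | apply: iota_word_mem].
have [s'' e] := iota_word_surj pu.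
by have := none s''; rewrite e eqxx.
Qed.

Lemma head_peak s i : derangement s -> i \in Cs s -> ty s i = (true, false).
Proof.
move=> ds iC; rewrite /ty.
have h1 := mem_orb_le iC (orb_sV s i).
have h2 : (s^-1)%g i != i.
  by apply: contra (der_fix i ds) => /eqP h; rewrite -{1}h permKV.
have h3 := mem_orb_le iC (orb_s s i).
have h4 := der_fix i ds.
rewrite ltn_neqAle h2 h1 ltnNge /=; congr (_, _).
by rewrite h3.
Qed.

Lemma B5 s a : derangement s -> ty s a != (true, false) ->
  has (gtX (val a).+1) (take (index (val a).+1 (iota_word s)) (iota_word s)).
Proof.
move=> ds nt.
have [i iC ai] := cover s a.
have ane : a != i by apply: contra nt => /eqP ->; rewrite head_peak.
have ale := mem_orb_le iC ai.
set k := index i (Cs s).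
have eC : Cs s = take k (Cs s) ++ i :: drop k.+1 (Cs s).
  by rewrite -{1}(cat_take_drop k (Cs s)) (drop_nth i) ?index_mem // nth_index.
have uw := iota_word_uniq s.
rewrite iota_wordE eC map_cat flatten_cat /= in uw *.
set P := flatten _; set Q := flatten _.
have [w [bw _]] := blk_cons iC.
have aw : (val a).+1 \in blk s i by rewrite /blk; apply: map_f.
have aP : (val a).+1 \notin P.
  move: uw; rewrite cat_uniq => /and3P[_ + _]; apply: contra => aP.
  by apply/hasP; exists (val a).+1; rewrite // mem_cat aw.
rewrite index_cat (negbTE aP) take_cat ltnNge leq_addr /= addKn has_cat.
rewrite bw /= eqSS; have -> : (val i == val a) = false.
  by apply/negbTE; rewrite eq_sym; apply: contra ane => /eqP /val_inj ->.
rewrite /= /gtX ltnS ltn_neqAle ale andbT.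
by have -> : (val a != val i) by []; rewrite orbT.
Qed.

Lemma tau_props s x : derangement s -> derangement (tau_c x s) ->
  [/\ tau_c x (tau_c x s) = s, cyc (tau_c x s) = cyc s,
      (forall a, a != x -> ty (tau_c x s) a = ty s a) &
      [/\ ty s x = (true, true) -> ty (tau_c x s) x = (false, false),
          ty s x = (false, false) -> ty (tau_c x s) x = (true, true) &
      (ty (tau_c x s) x == (true, false)) = (ty s x == (true, false))]].
Proof.
move=> ds dt.
have ur := iota_word_uniq s; have Xr := iota_word_mem s x.
have tw := tau_word s x.
case: (boolP (is_peak (val x).+1 (iota_word s))) => pk.
  have e : tau_c x s = s by apply: iota_word_inj; rewrite tw word_peak.
  have tp : ty s x = (true, false) by move: pk; rewrite peak_lk // lk_word // => /eqP.
  by rewrite e tp; split => //; split.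
have nt : ty s x != (true, false) by move: pk; rewrite peak_lk // lk_word.
have [pe inv lkeq [lk1 lk2 lk3] rc] := word_main ur Xr pk (B5 ds nt).
split.
- by apply: iota_word_inj; rewrite tau_word tw inv.
- by rewrite !cyc_word tw rc.
- by move=> a ax; rewrite -!lk_word // tw lkeq //; exact: iota_word_mem.
- rewrite -!lk_word // tw; split => //.
  by rewrite (negbTE lk3); move: pk; rewrite peak_lk // => /negbTE ->.
Qed.

End Surj.

Import GRing.Theory.

Section Abstract.
Variables (R : comRingType) (n : nat) (Pi : {set {perm 'I_n}})
  (tau : 'I_n -> {perm 'I_n} -> {perm 'I_n}) (ty : {perm 'I_n} -> 'I_n -> bool * bool)
  (G : {perm 'I_n} -> R) (t : R).
Hypotheses
  (H1 : forall x s, s \in Pi -> tau x s \in Pi)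
  (H2 : forall x s, s \in Pi -> tau x (tau x s) = s)
  (H3 : forall x s, s \in Pi -> G (tau x s) = G s)
  (H4 : forall x s a, s \in Pi -> a != x -> ty (tau x s) a = ty s a)
  (H5 : forall x s, s \in Pi -> ty s x = (true, true) -> ty (tau x s) x = (false, false))
  (H6 : forall x s, s \in Pi -> ty s x = (false, false) -> ty (tau x s) x = (true, true)).

Implicit Types (L : {set 'I_n}) (x a : 'I_n) (s : {perm 'I_n}).

Definition fw (L : {set 'I_n}) (a : 'I_n) (c : bool * bool) : R :=
  match c with
  | (true, false) => 1
  | (false, true) => t
  | (true, true) => if a \in L then 1 + t else t
  | (false, false) => if a \in L then 1 + t else 1
  end%R.

Definition QL (L : {set 'I_n}) s := [forall a, (a \in L) ==> (ty s a != (true, true))].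

Definition WL L s := (G s * \prod_a fw L a (ty s a))%R.

Definition SL L := (\sum_s (if (s \in Pi) && QL L s then WL L s else 0))%R.

Lemma fw_U L x a c : a != x -> fw (x |: L) a c = fw L a c.
Proof. by move=> ax; rewrite /fw in_setU1 (negbTE ax). Qed.

Lemma QL_U L x s : QL (x |: L) s = QL L s && (ty s x != (true, true)).
Proof.
apply/forallP/andP => [h|[/forallP h hx] a].
  split; last by apply: (implyP (h x)); rewrite setU11.
  by apply/forallP => a; apply/implyP => aL; apply: (implyP (h a)); rewrite in_setU1 aL orbT.
rewrite in_setU1; apply/implyP => /orP[/eqP -> //|aL].
exact: (implyP (h a)).
Qed.

Lemma QL_tau L x s : x \notin L -> s \in Pi -> QL L (tau x s) = QL L s.
Proof.
move=> xL sP; apply: eq_forallb => a; case: (boolP (a \in L)) => //= aL.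
by rewrite H4 //; apply: contraNneq xL => <-.
Qed.

Let sig x s := if s \in Pi then tau x s else s.

Lemma sig_inv x : involutive (sig x).
Proof.
move=> s; rewrite /sig; case: (boolP (s \in Pi)) => sP; last by rewrite (negbTE sP).
by rewrite H1 // H2.
Qed.

Lemma reidx L x : x \notin L ->
  (\sum_s (if (s \in Pi) && QL L s && (ty s x == (true, true)) then WL L s else 0) =
   \sum_s (if (s \in Pi) && QL L s && (ty s x == (false, false)) then WL L (tau x s) else 0))%R.
Proof.
move=> xL; rewrite (reindex_inj (inv_inj (sig_inv x))); apply: eq_bigr => s _.
rewrite /sig; case: (boolP (s \in Pi)) => sP; last by rewrite (negbTE sP).
rewrite H1 // QL_tau //=; congr (if _ then _ else _); congr (_ && _).
apply/eqP/eqP => [h|h]; last exact: H6.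
by rewrite -(H2 x sP); apply: H5; rewrite ?H1.
Qed.

Lemma WL_split L x s : x \notin L -> s \in Pi -> ty s x = (false, false) ->
  WL (x |: L) s = (WL L s + WL L (tau x s))%R.
Proof.
move=> xL sP tx; rewrite /WL H3 //.
rewrite (bigD1 x) // (bigD1 x (P := predT)) // (bigD1 x (P := predT)) //.
have e1 : (\prod_(i | predT i && (i != x)) fw (x |: L) i (ty s i) =
           \prod_(i | predT i && (i != x)) fw L i (ty s i))%R.
  by apply: eq_bigr => a ax; rewrite fw_U.
have e2 : (\prod_(i | predT i && (i != x)) fw L i (ty (tau x s) i) =
           \prod_(i | predT i && (i != x)) fw L i (ty s i))%R.
  by apply: eq_bigr => a ax; rewrite H4.
rewrite e1 e2 (H6 sP tx) tx.
have -> : fw (x |: L) x (false, false) = (1 + t)%R by rewrite /fw setU11.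
have -> : fw L x (false, false) = 1%R by rewrite /fw (negbTE xL).
have -> : fw L x (true, true) = t by rewrite /fw (negbTE xL).
by rewrite /=; ring.
Qed.

Lemma WL_same L x s : ty s x != (true, true) -> ty s x != (false, false) ->
  WL (x |: L) s = WL L s.
Proof.
move=> h1 h2; rewrite /WL; congr (_ * _)%R; apply: eq_bigr => a _.
case: (eqVneq a x) => [->|ax]; last exact: fw_U.
by move: h1 h2; case: (ty s x) => [[] []].
Qed.

Lemma SL_step L x : x \notin L -> SL (x |: L) = SL L.
Proof.
move=> xL; rewrite /SL.
have e1 : forall s, ((if (s \in Pi) && QL L s then WL L s else 0) =
   (if (s \in Pi) && QL L s && (ty s x != (true, true)) then WL L s else 0) +
   (if (s \in Pi) && QL L s && (ty s x == (true, true)) then WL L s else 0))%R.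
  move=> s; case: ((s \in Pi) && QL L s) => /=; last by rewrite addr0.
  by case: (ty s x == (true, true)); rewrite ?addr0 ?add0r.
have e2 : forall s, ((if (s \in Pi) && QL (x |: L) s then WL (x |: L) s else 0) =
   (if (s \in Pi) && QL L s && (ty s x != (true, true)) then WL L s else 0) +
   (if (s \in Pi) && QL L s && (ty s x == (false, false)) then WL L (tau x s) else 0))%R.
  move=> s; rewrite QL_U andbA.
  case: (boolP ((s \in Pi) && QL L s)) => /= [/andP[sP _]|_]; last by rewrite addr0.
  case: (eqVneq (ty s x) (true, true)) => [->|ht] /=; first by rewrite add0r.
  case: (eqVneq (ty s x) (false, false)) => [hf|hf] /=.
    by rewrite WL_split.
  by rewrite addr0 WL_same.
rewrite (eq_bigr _ (fun s _ => e2 s)) (eq_bigr _ (fun s _ => e1 s)) !big_split /=.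
by rewrite reidx.
Qed.

Lemma SL_all L : SL L = SL set0.
Proof.
move: {2}#|L| (erefl #|L|) => k; elim: k L => [|k IH] L hk.
  by move/eqP: hk; rewrite cards_eq0 => /eqP ->.
have : (0 < #|L|)%N by rewrite hk.
rewrite card_gt0 => /set0Pn [x xL].
rewrite -(setD1K xL) SL_step ?setD11 // IH //.
by move: hk; rewrite (cardsD1 x L) xL add1n => -[].
Qed.

End Abstract.

Import GRing.Theory.

Lemma card_count (T : finType) (P : pred T) : #|P| = count P (enum T).
Proof. rewrite cardE /enum_mem size_filter count_filter; apply: eq_count => x /=. by rewrite andbT. Qed.

Lemma neq_lt a b : a != b -> (b < a) = ~~ (a < b).
Proof. by move=> ab; rewrite ltnNge leq_eqVlt (negbTE ab). Qed.

Lemma pv_tyl a u : path (fun x y : nat => x != y) a u ->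
  count (fun p => p.2 == (false, true)) (tyl a u None) =
  count (fun p => p.2 == (true, false)) (tyl a u None) + (if u is b :: _ then b < a else false).
Proof.
elim: u a => [|b u IH] a //= /andP[ab pu].
have IH' := IH b pu; clear IH.
case: u IH' pu => [|c u] /= IH' pu.
  by rewrite (neq_lt ab); case: (a < b).
move: pu => /andP[bc _]; rewrite IH' (neq_lt bc).
rewrite (neq_lt ab).
set K := count _ _; set E := (_ == (true, false)).
by case: (a < b); case: (b < c); rewrite /= ?addn0 ?add0n; lia.
Qed.

Lemma uniq_path a u : uniq (a :: u) -> path (fun x y : nat => x != y) a u.
Proof.
elim: u a => [|b u IH] a //= /andP[]; rewrite inE negb_or => /andP[ab au] /andP[bu uu].
by rewrite ab IH //= bu.
Qed.

Section Fin.
Variable n : nat.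
Implicit Types (s : {perm 'I_n}) (a : 'I_n).

Lemma N_count s c : derangement s ->
  #|[set a | ty s a == c]| = count (fun p => p.2 == c) (tys (iota_word s)).
Proof.
move=> ds; rewrite cardsE card_count -((seq.permP (flat_perm s)) _) tys_word //.
by rewrite count_map.
Qed.

Lemma peaks_valleys s : derangement s ->
  #|[set a | ty s a == (false, true)]| = #|[set a | ty s a == (true, false)]|.
Proof.
move=> ds; rewrite !N_count // /tys pv_tyl ?addn0; last first.
  apply: uniq_path; rewrite /= iota_word_uniq andbT.
  by rewrite iota_word_map; apply/negP => /mapP [j _ h].
by case: (iota_word s) => [|b u] /=; rewrite ?ltn0 addn0.
Qed.
End Fin.

Import GRing.Theory.

Lemma prod_if (R : comRingType) (T : finType) (P : pred T) (c : R) :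
  (\prod_(a : T) (if P a then c else 1) = c ^+ #|[set a | P a]|)%R.
Proof.
rewrite -big_mkcond /= -prodr_const; apply: eq_bigl => a.
by rewrite inE.
Qed.

Lemma prod_ty (R : comRingType) n (T : 'I_n -> bool * bool) (g : bool * bool -> R) :
  (\prod_(a : 'I_n) g (T a) =
   (g (true, true) ^+ #|[set a | T a == (true, true)]| *
    g (true, false) ^+ #|[set a | T a == (true, false)]|) *
   (g (false, true) ^+ #|[set a | T a == (false, true)]| *
    g (false, false) ^+ #|[set a | T a == (false, false)]|))%R.
Proof.
rewrite (partition_big T predT) //=.
have inner c : (\prod_(a | true && (T a == c)) g (T a) = g c ^+ #|[set a | T a == c]|)%R.
  rewrite -prod_if big_mkcond; apply: eq_bigr => a _.
  by case: eqP => // ->.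
rewrite (eq_bigr _ (fun c _ => inner c)).
have -> : (\prod_(c | predT c) g c ^+ #|[set a | T a == c]| =
    \prod_(b1 : bool) \prod_(b2 : bool) g (b1, b2) ^+ #|[set a | T a == (b1, b2)]|)%R.
  by rewrite pair_bigA; apply: eq_bigr => -[b1 b2].
by rewrite !big_bool.
Qed.

Section Final.
Variable n : nat.
Implicit Types (s : {perm 'I_n}) (a : 'I_n).

Lemma cpk_ty s : derangement s -> cpk s = #|[set a | ty s a == (true, false)]|.
Proof.
move=> ds; rewrite /cpk; apply: eq_card => a; rewrite !inE /ty xpair_eqE eqb_id eqbF_neg.
congr (_ && _); apply: neq_lt.
by rewrite eq_sym; have := der_fix a ds.
Qed.

Lemma exc_prod (R : comRingType) (t : R) s : (t ^+ exc s = \prod_a fw t set0 a (ty s a))%R.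
Proof.
rewrite /exc -(prod_if (fun i : 'I_n => (i < s i)%N)); apply: eq_bigr => a _.
by rewrite /fw /ty in_set0; case: (_ < _)%N; case: (_ < _)%N.
Qed.

End Final.

Import GRing.Theory.
Unset Implicit Arguments.
Local Open Scope ring_scope.

Theorem theorem4p2 (R : fieldType) (n : nat) (Pi : {set {perm 'I_n}})
  (w x t : R) :
  (0 < n)%N ->
  (forall s, s \in Pi -> derangement s) ->
  CMFS_invariant Pi ->
  1 + x != 0 -> x + t != 0 -> 1 + x * t != 0 ->
  \sum_(s in Pi) w ^+ cyc s * t ^+ exc s =
  ((1 + x * t) / (1 + x)) ^+ n *
  \sum_(s in Pi) w ^+ cyc s
      * ((1 + x) ^+ 2 * t / ((x + t) * (1 + x * t))) ^+ cpk s
      * ((x + t) / (1 + x * t)) ^+ exc s.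
Proof.
move=> n0 derP inv h1 h2 h3.
set q := (1 + x * t) / (1 + x).
set Y := (1 + x) ^+ 2 * t / ((x + t) * (1 + x * t)).
set Z := (x + t) / (1 + x * t).
have tP : forall (y : 'I_n) s, s \in Pi -> tau_c y s \in Pi.
  by move=> y s sP; have := inv [set y] s sP; rewrite /tau_cS enum_set1.
have TP := fun y s (sP : s \in Pi) => @tau_props n s y (derP s sP) (derP _ (tP y s sP)).
have A2 : forall y s, s \in Pi -> tau_c y (tau_c y s) = s.
  by move=> y s sP; case: (TP y s sP).
have A4 : forall y s a, s \in Pi -> a != y -> ty (tau_c y s) a = ty s a.
  by move=> y s a sP ay; case: (TP y s sP) => _ _ a4 _; apply: a4.
have A5 : forall y s, s \in Pi -> ty s y = (true, true) -> ty (tau_c y s) y = (false, false).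
  by move=> y s sP; case: (TP y s sP) => _ _ _ [a5 _ _].
have A6 : forall y s, s \in Pi -> ty s y = (false, false) -> ty (tau_c y s) y = (true, true).
  by move=> y s sP; case: (TP y s sP) => _ _ _ [_ a6 _].
have Acyc : forall y s, s \in Pi -> cyc (tau_c y s) = cyc s.
  by move=> y s sP; case: (TP y s sP) => _ a3 _ _.
have Acpk : forall y s, s \in Pi -> cpk (tau_c y s) = cpk s.
  move=> y s sP; rewrite !cpk_ty ?derP ?tP //.
  case: (TP y s sP) => _ _ a4 [_ _ a7].
  apply: eq_card => a; rewrite !inE; case: (eqVneq a y) => [->|ay]; first exact: a7.
  by rewrite a4.
pose G1 := fun s : {perm 'I_n} => w ^+ cyc s.
pose G2 := fun s : {perm 'I_n} => w ^+ cyc s * Y ^+ cpk s.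
have A3a : forall y s, s \in Pi -> G1 (tau_c y s) = G1 s.
  by move=> y s sP; rewrite /G1 Acyc.
have A3b : forall y s, s \in Pi -> G2 (tau_c y s) = G2 s.
  by move=> y s sP; rewrite /G2 Acyc // Acpk.
have Q0 : forall s, QL (@ty n) set0 s = true.
  by move=> s; apply/forallP => a; rewrite inE.
have L1 : \sum_(s in Pi) w ^+ cyc s * t ^+ exc s = SL Pi (@ty n) G1 t set0.
  rewrite /SL big_mkcond; apply: eq_bigr => s _; rewrite Q0 andbT.
  by case: ifP => // sP; rewrite /WL exc_prod.
have L2 : \sum_(s in Pi) w ^+ cyc s * Y ^+ cpk s * Z ^+ exc s = SL Pi (@ty n) G2 Z set0.
  rewrite /SL big_mkcond; apply: eq_bigr => s _; rewrite Q0 andbT.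
  by case: ifP => // sP; rewrite /WL exc_prod.
rewrite L1 L2.
rewrite -(SL_all (tau := fun y s => tau_c y s) t tP A2 A3a A4 A5 A6 setT).
rewrite -(SL_all (tau := fun y s => tau_c y s) Z tP A2 A3b A4 A5 A6 setT).
rewrite /SL mulr_sumr; apply: eq_bigr => s _.
case: ifP => [/andP[sP Qs]|_]; last by rewrite mulr0.
have ds := derP s sP.
pose g (u : R) (c : bool * bool) : R :=
  match c with (true, false) => 1 | (false, true) => u | _ => 1 + u end.
have fT : forall (u : R) (a : 'I_n) (c : bool * bool), fw u setT a c = g u c.
  by move=> u a [[] []]; rewrite /fw /g ?in_setT.
have e1 : \prod_a fw t setT a (ty s a) = \prod_a g t (ty s a).
  by apply: eq_bigr => a _; apply: fT.
have e2 : \prod_a fw Z setT a (ty s a) = \prod_a g Z (ty s a).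
  by apply: eq_bigr => a _; apply: fT.
rewrite /WL /G1 /G2 e1 e2.
have qn := prod_ty (ty s) (fun _ => q).
rewrite /= prodr_const card_ord in qn.
rewrite qn !prod_ty /g cpk_ty //.
have -> : #|[set a | ty s a == (true, true)]| = 0%N.
  apply/eqP; rewrite cards_eq0; apply/eqP/setP => a; rewrite !inE.
  by apply/negbTE; have := forallP Qs a; rewrite in_setT.
rewrite (peaks_valleys ds).
set B := #|[set a | ty s a == (true, false)]|.
set D := #|[set a | ty s a == (false, false)]|.
have eA : t = q * Y * (q * Z).
  by rewrite /q /Y /Z; field; rewrite h1 h2 h3.
have eB : 1 + t = q * (1 + Z).
  by rewrite /q /Z; field; rewrite h1 h3.
rewrite eB [in t ^+ B]eA.
clearbody q Y Z.
rewrite !expr0 !expr1n !exprMn.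
move: (w ^+ _) (q ^+ B) (q ^+ D) (Y ^+ B) (Z ^+ B) ((1 + Z) ^+ D) => W1 QB QD YB ZB ZD.
ring.
Qed.
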